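(* Let $\mathcal{I}$ be an interval hypergraph on $[n]$ and $A$ an acyclic orientation of $\mathcal{I}$. Then the fiber $\{\pi:\mathrm{Or}_\pi=A\}$ is an interval $[\sigma,\tau]$ of the weak order on permutations of $[n]$, where $\sigma$ avoids the pattern $231$ and $\tau$ avoids the pattern $213$.
   Context: An interval hypergraph $\mathcal{I}$ on $[n]$ is a collection of intervals of $[n]$ containing all singletons. An orientation is a map $O:\mathcal{I}\to[n]$ with $O(I)\in I$; it is acyclic if there are no $H_1,\dots,H_k\in\mathcal{I}$, $k\ge2$, with $O(H_{i+1})\in H_i\setminus\{O(H_i)\}$ for $i\in[k-1]$ and $O(H_1)\in H_k\setminus\{O(H_k)\}$. For a permutation $\pi$ of $[n]$ in one-line notation, $\mathrm{Or}_\pi(I)=\pi(\min\{j:\pi(j)\in I\})$. *)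

(* Defs.v *)
(* [n] = {1,...,n} is modelled by 'I_n = {0,...,n-1}. *)
From mathcomp Require Import all_boot all_fingroup.
Set Implicit Arguments. Unset Strict Implicit. Unset Printing Implicit Defensive.

Section Defs.
Variable n : nat.

Definition is_interval (I : {set 'I_n}) : Prop :=
  exists a b : 'I_n, a <= b /\ I = [set i : 'I_n | (a <= i) && (i <= b)].

Definition interval_hypergraph (H : {set {set 'I_n}}) : Prop :=
  (forall I, I \in H -> is_interval I) /\ (forall i : 'I_n, [set i] \in H).

(* An orientation of H: O I \in I for every hyperedge I (values of O outside H
   are irrelevant). *)
Definition orientation (H : {set {set 'I_n}}) (O : {set 'I_n} -> 'I_n) : Prop :=
  forall I, I \in H -> O I \in I.

(* Acyclicity: no H_1, ..., H_k in H, k >= 2, with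
   O(H_{i+1}) \in H_i \ {O(H_i)} (indices cyclically). *)
Definition acyclic (H : {set {set 'I_n}}) (O : {set 'I_n} -> 'I_n) : Prop :=
  ~ exists s : seq {set 'I_n},
      [/\ 2 <= size s, all (fun X : {set 'I_n} => X \in H) s &
          path.cycle (fun X Y : {set 'I_n} => (O Y \in X) && (O Y != O X)) s].

(* One-line notation of pi: the word pi(0) pi(1) ... pi(n-1).
   Or_pi(I) = pi(min {j : pi(j) \in I}) = first letter of the word lying in I
   (None if I is empty). *)
Definition oneline (pi : 'S_n) : seq 'I_n := [seq pi j | j <- enum 'I_n].

Definition Or (pi : 'S_n) (I : {set 'I_n}) : option 'I_n :=
  ohead [seq x <- oneline pi | x \in I].

Definition pos (pi : 'S_n) (a : 'I_n) : 'I_n := (pi^-1)%g a.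

(* Weak order: inversion sets (of values) are included, where
   (a,b) with a < b is an inversion of pi when b appears before a. *)
Definition weak_le (pi tau : 'S_n) : Prop :=
  forall a b : 'I_n, a < b -> pos pi b < pos pi a -> pos tau b < pos tau a.

Definition avoids231 (sigma : 'S_n) : Prop :=
  ~ exists i j k : 'I_n,
      [/\ i < j, j < k, sigma k < sigma i & sigma i < sigma j].

Definition avoids213 (sigma : 'S_n) : Prop :=
  ~ exists i j k : 'I_n,
      [/\ i < j, j < k, sigma j < sigma i & sigma i < sigma k].

End Defs.

(* Main.v *)
Require Import Defs.
From mathcomp Require Import all_boot all_fingroup.
From mathcomp Require Import zify.
Set Implicit Arguments. Unset Strict Implicit. Unset Printing Implicit Defensive.

Lemma perm_of_rel n (r : rel 'I_n) :
  irreflexive r -> transitive r -> (forall u v, u != v -> r u v || r v u) ->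
  exists s : 'S_n, forall a b, (pos s a < pos s b) = r a b.
Proof.
move=> irr tr tot.
have Hlt v : #|[set u | r u v]| < n.
  rewrite -[n in _ < n]card_ord -cardsT; apply: proper_card; rewrite properT.
  apply/eqP => E; have : v \in [set u | r u v] by rewrite E inE.
  by rewrite inE irr.
pose f v := Ordinal (Hlt v).
have mono u v : r u v -> f u < f v.
  move=> ruv /=; apply: proper_card; rewrite properE; apply/andP; split.
    by apply/subsetP => w; rewrite !inE => rwu; exact: tr rwu ruv.
  by apply/subsetPn; exists u; rewrite !inE // irr.
have finj : injective f.
  move=> u v /(congr1 val) /= Euv; apply/eqP; apply/negPn/negP => neq.
  by case/orP: (tot _ _ neq) => /mono /=; rewrite Euv ltnn.
exists (perm finj)^-1%g => a b; rewrite /pos invgK !permE.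
apply/idP/idP; last exact: mono.
move=> lt; case: (eqVneq a b) => [eab|nab]; first by rewrite eab ltnn in lt.
case/orP: (tot _ _ nab) => // /mono => lt2.
by have := ltn_trans lt lt2; rewrite ltnn.
Qed.

Lemma ohead_filterP (T : eqType) (p : pred T) (s : seq T) y : uniq s ->
  ohead (filter p s) = Some y <->
  [/\ y \in s, p y & forall z, z \in s -> p z -> z != y -> index y s < index z s].
Proof.
elim: s => [|x s IH] /=.
  by move=> _; split=> // -[].
case/andP=> xs us; case: ifP => px /=.
  split.
    case=> <-; split; [by rewrite inE eqxx | done | ].
    move=> z _ _ zx; rewrite eqxx; case: eqP => // exz.
    by rewrite exz eqxx in zx.
  case=> ys py Hz; case: (eqVneq x y) => [->//|xy].
  have := Hz x (mem_head _ _) px xy; rewrite eqxx.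
  by rewrite ltn0.
apply: iff_trans (IH us) _; case: (eqVneq x y) => [exy|xy].
  split; first by case=> _ py _; rewrite exy py in px.
  by case=> _ py _; rewrite exy py in px.
split.
  case=> ys py Hz; split; [by rewrite inE ys orbT | done |].
  move=> z; rewrite inE => /orP[/eqP->|zs] pz zy; first by rewrite pz in px.
  case: (eqVneq x z) => [exz|xz].
    by rewrite exz pz in px.
  by rewrite ltnS; exact: Hz.
case=> ys py Hz; split.
- by move: ys; rewrite inE eq_sym (negbTE xy).
- done.
- move=> z zs pz zy; have zs2 : z \in x :: s by rewrite inE zs orbT.
  have := Hz z zs2 pz zy.
  case: (eqVneq x z) => [exz|xz].
    by rewrite exz pz in px.
  by rewrite ltnS.
Qed.

Lemma Or_char n (pi : 'S_n) (I : {set 'I_n}) (a : 'I_n) : a \in I ->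
  Or pi I = Some a <-> (forall x, x \in I -> x != a -> pos pi a < pos pi x).
Proof.
move=> aI.
have us : uniq (oneline pi).
  by rewrite map_inj_uniq ?enum_uniq //; exact: perm_inj.
have mem x : x \in oneline pi by rewrite -(permKV pi x) map_f // mem_enum.
have idx x : index x (oneline pi) = pos pi x.
  by rewrite /oneline -{1}(permKV pi x) index_map ?index_enum_ord //; exact: perm_inj.
rewrite /Or ohead_filterP //; split.
  by case=> _ _ Hz x xI xa; rewrite -!idx; exact: Hz.
by move=> Hz; split => // z _ zI za; rewrite !idx; exact: Hz.
Qed.

Section Main.
Variable n : nat.
Variable H : {set {set 'I_n}}.
Variable A : {set 'I_n} -> 'I_n.
Hypothesis Hint : forall I, I \in H -> is_interval I.
Hypothesis Hor : orientation H A.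
Hypothesis Hac : acyclic H A.

Definition E : rel 'I_n :=
  fun x y => [exists I, [&& I \in H, A I == x, y \in I & y != x]].

Lemma EP x y : reflect (exists I, [/\ I \in H, A I = x, y \in I & y != x]) (E x y).
Proof.
apply: (iffP existsP) => [[I /and4P[? /eqP ? ? ?]]|[I [? ? ? ?]]]; exists I => //.
by apply/and4P; split => //; apply/eqP.
Qed.

Inductive TC : 'I_n -> 'I_n -> Prop :=
| TC1 x y of E x y : TC x y
| TCS x y z of E x y & TC y z : TC x z.

Lemma TC_trans x y z : TC x y -> TC y z -> TC x z.
Proof.
elim=> [a b Eab|a b c Eab _ IH] Hz; first exact: TCS Eab Hz.
exact: TCS Eab (IH Hz).
Qed.

Definition Pb x y := [exists z, E x z && connect E z y].

Lemma PbP x y : reflect (TC x y) (Pb x y).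
Proof.
apply: (iffP existsP).
  case=> z /andP[Exz /connectP[p pth ->]].
  have Hxz := TC1 Exz; elim: p z Hxz {Exz} pth => [|w p IH] z Hxz //=.
  case/andP=> Ezw pth; apply: IH pth; exact: TC_trans Hxz (TC1 Ezw).
elim=> [a b Eab|a b c Eab _ [w /andP[Ebw cw]]].
  by exists b; rewrite Eab connect0.
exists b; rewrite Eab /=; exact: connect_trans (connect1 Ebw) cw.
Qed.

Lemma TC_irr x : ~ TC x x.
Proof.
pose R := fun X Y : {set 'I_n} => (A Y \in X) && (A Y != A X).
have key a b : TC a b -> exists X s, [/\ X \in H, all (fun X => X \in H) s,
    A X = a, path R X s & (b \in last X s) && (b != A (last X s))].
  elim=> [u v /EP [I [IH AI vI vu]]|u v w /EP [I [IH AI vI vu]] _ [X [s [XH sH AX pth lst]]]].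
    by exists I, [::]; split => //=; rewrite vI AI vu.
  exists I, (X :: s); split => //=; first by rewrite XH.
  by rewrite pth andbT /R AX AI vI vu.
move=> /key [X [s [XH sH AX pth /andP[xl xa]]]].
apply: Hac; exists (X :: s); split.
- case: s pth xl xa {sH} => [|Y s] //= _ _; first by rewrite AX eqxx.
- by rewrite /= XH.
- by rewrite /= rcons_path pth /R AX xl xa.
Qed.

Lemma in_between (I : {set 'I_n}) (x y b : 'I_n) : I \in H -> x \in I -> y \in I ->
  (x < b < y) || (y < b < x) -> b \in I.
Proof.
case/Hint => lo [hi [_ ->]]; rewrite !inE => /andP[? ?] /andP[? ?] ?.
apply/andP; split; lia.
Qed.

Lemma between c a : TC c a -> forall b : 'I_n, (a < b < c) || (c < b < a) -> TC c b.
Proof.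
elim=> [u v /EP [I [IH AI vI vu]]|u v w /EP [I [IH AI vI vu]] _ IHc] b bb.
  apply: TC1; apply/EP; exists I; split => //.
    by apply: in_between IH vI (Hor IH) _; rewrite AI; move: bb; clear; lia.
  by apply/eqP => bu; move: bb; rewrite bu; clear; lia.
have Euv : E u v by apply/EP; exists I.
case: (eqVneq b v) => [->|bv]; first exact: TC1.
have [bin|bout] := boolP ((w < b < v) || (v < b < w)).
  exact: TCS Euv (IHc b bin).
apply: TC1; apply/EP; exists I; split => //.
  apply: in_between IH vI (Hor IH) _; rewrite AI.
  move: bv; rewrite -val_eqE /= => bv; move: bv bb bout; clear; lia.
by apply/eqP => bu; move: bb; rewrite bu; clear; lia.
Qed.

Definition rk (k : 'I_n -> nat) : rel 'I_n :=
  fun u v => (u != v) && (if k u < k v then ~~ Pb v u else Pb u v).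

Lemma rk_props (k : 'I_n -> nat) :
  (forall u v, k u = k v -> u = v) ->
  (forall a b c : 'I_n, (k a < k b < k c) || (k c < k b < k a) -> TC c a -> TC c b) ->
  [/\ irreflexive (rk k), transitive (rk k)
    & forall u v, u != v -> rk k u v || rk k v u].
Proof.
move=> kinj Lk.
have Ptr x y z : Pb x y -> Pb y z -> Pb x z.
  by move=> /PbP h1 /PbP h2; apply/PbP; exact: TC_trans h1 h2.
have PL a b c : (k a < k b < k c) || (k c < k b < k a) -> Pb c a -> Pb c b.
  by move=> h /PbP h2; apply/PbP; exact: Lk h h2.
split.
- by move=> u; rewrite /rk eqxx.
- move=> v u w /andP[nuv ruv] /andP[nvw rvw].
  have nuw : u != w.
    apply/eqP => euw; subst w; move: ruv rvw.
    case: ltngtP => [h|h|/kinj e]; last by rewrite e eqxx in nuv.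
      by move/negbTE => ->.
    by move=> ->.
  rewrite /rk nuw /=.
  move: ruv; case: (ltngtP (k u) (k v)) => [h1|h1|/kinj e]; last by rewrite e eqxx in nuv.
  + move=> ruv; move: rvw; case: (ltngtP (k v) (k w)) => [h2|h2|/kinj e]; last by rewrite e eqxx in nvw.
    * move=> rvw; have -> : k u < k w by lia.
      apply/negP => Pwu; move/negP: rvw; apply; apply: (PL u) Pwu; lia.
    * move=> rvw; case: ltngtP => [h3|h3|/kinj e]; last by rewrite e eqxx in nuw.
        by apply/negP => Pwu; move/negP: ruv; apply; exact: Ptr rvw Pwu.
      exfalso; move/negP: ruv; apply; apply: (PL w) rvw; lia.
  + move=> ruv; move: rvw; case: (ltngtP (k v) (k w)) => [h2|h2|/kinj e]; last by rewrite e eqxx in nvw.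
    * move=> rvw; case: ltngtP => [h3|h3|/kinj e]; last by rewrite e eqxx in nuw.
        by apply/negP => Pwu; move/negP: rvw; apply; exact: Ptr Pwu ruv.
      apply: (PL v) ruv; lia.
    * move=> rvw; have -> : k u < k w = false by lia.
      exact: Ptr ruv rvw.
- move=> u v nuv; rewrite /rk nuv eq_sym nuv /=.
  case: ltngtP => [h|h|/kinj e]; last by rewrite e eqxx in nuv.
    by case: (Pb v u).
  by case: (Pb u v).
Qed.

Lemma main_sec : exists sigma tau : 'S_n,
    [/\ (forall pi : 'S_n,
           (forall I, I \in H -> Or pi I = Some (A I)) <->
           (weak_le sigma pi /\ weak_le pi tau)),
        avoids231 sigma & avoids213 tau].
Proof.
have [irr1 tr1 tot1] := @rk_props (fun x => val x) (@val_inj _ _ _)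
  (fun a b c h t => between t h).
have kinj2 : forall u v : 'I_n, n - u = n - v -> u = v.
  move=> u v e; apply: ord_inj; have := ltn_ord u; have := ltn_ord v; move: e; clear; lia.
have L2 : forall a b c : 'I_n, (n - a < n - b < n - c) || (n - c < n - b < n - a) ->
    TC c a -> TC c b.
  move=> a b c h t; apply: (between t).
  have := ltn_ord a; have := ltn_ord b; have := ltn_ord c; move: h; clear; lia.
have [irr2 tr2 tot2] := @rk_props (fun x : 'I_n => n - x) kinj2 L2.
have [sigma Hs] := perm_of_rel irr1 tr1 tot1.
have [tau Ht] := perm_of_rel irr2 tr2 tot2.
have fib pi : (forall I, I \in H -> Or pi I = Some (A I)) <->
    (forall x y, E x y -> pos pi x < pos pi y).
  split.
    move=> h x y /EP[I [IH AI yI yx]]; rewrite -AI.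
    by move/(Or_char _ (Hor IH)): (h I IH) => h'; apply: h' => //; rewrite AI.
  move=> h I IH; apply/(Or_char _ (Hor IH)) => x xI xa; apply: h; apply/EP.
  by exists I.
have ext pi : (forall x y, E x y -> pos pi x < pos pi y) ->
    forall x y, TC x y -> pos pi x < pos pi y.
  move=> h x0 y0; elim=> [x y /h //|x y z /h h1 _ h2]; last exact: ltn_trans h1 h2.
have posK (s : 'S_n) i : pos s (s i) = i by rewrite /pos permK.
exists sigma, tau; split.
- move=> pi; rewrite fib; split.
  + move=> hE; have hT := ext _ hE; split.
      move=> a b ab; rewrite Hs /rk /=; case/andP => _.
      have -> : (b < a) = false by move: ab; clear; lia.
      by move/PbP/hT.
    move=> a b ab lt; rewrite Ht /rk /=; apply/andP; split.
      by apply/eqP => e; rewrite e ltnn in ab.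
    have -> : n - b < n - a by have := ltn_ord b; move: ab; clear; lia.
    apply/negP => /PbP /hT h; have := ltn_trans h lt; by rewrite ltnn.
  + case=> ls lt x y Exy; have Txy := TC1 Exy.
    have nxy : x != y by case/EP: Exy => I [_ _ _]; rewrite eq_sym.
    case: (ltngtP x y) => h.
    * case: (ltngtP (pos pi x) (pos pi y)) => // h2.
        have := lt x y h h2; rewrite Ht /rk /=.
        have -> : n - y < n - x by have := ltn_ord y; move: h; clear; lia.
        by move/PbP: Txy => ->; rewrite andbF.
      by move/val_inj/perm_inj: h2 => e; rewrite e eqxx in nxy.
    * apply: ls => //; rewrite Hs /rk /= nxy.
      have -> : (x < y) = false by move: h; clear; lia.
      exact/PbP.
    * by move/val_inj: h => e; rewrite e eqxx in nxy.
- case=> i [j [k [ij jk ki ij']]].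
  have r1 : rk val (sigma j) (sigma k) by rewrite -Hs !posK.
  have r2 : rk val (sigma i) (sigma j) by rewrite -Hs !posK.
  move: r1 r2; rewrite /rk /=.
  have -> : (sigma j < sigma k) = false by move: ki ij'; clear; lia.
  rewrite ij' => /andP[_ /PbP t] /andP[_ /negP]; apply; apply/PbP.
  by apply: (between t); rewrite ki ij'.
- case=> i [j [k [ij jk ki ij']]].
  have r1 : rk (fun x : 'I_n => n - x) (tau j) (tau k) by rewrite -Ht !posK.
  have r2 : rk (fun x : 'I_n => n - x) (tau i) (tau j) by rewrite -Ht !posK.
  move: r1 r2; rewrite /rk /=.
  have -> : (n - tau j < n - tau k) = false by move: ki ij'; clear; lia.
  have -> : (n - tau i < n - tau j) by have := ltn_ord (tau i); move: ki; clear; lia.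
  move=> /andP[_ /PbP t] /andP[_ /negP]; apply; apply/PbP.
  apply: (between t); apply/orP; right; by rewrite ki ij'.
Qed.

End Main.

Theorem proposition3p10 (n : nat) (H : {set {set 'I_n}})
    (A : {set 'I_n} -> 'I_n) :
  interval_hypergraph H -> orientation H A -> acyclic H A ->
  exists sigma tau : 'S_n,
    [/\ (forall pi : 'S_n,
           (forall I, I \in H -> Or pi I = Some (A I)) <->
           (weak_le sigma pi /\ weak_le pi tau)),
        avoids231 sigma & avoids213 tau].
Proof.
by case=> Hint _ Hor _; exact: (main_sec Hint Hor).
Qed.
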